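(* Let $\Omega$ be a topological space, $X$ a locally convex topological vector space with defining family of seminorms $\mathfrak{A}$, and $X_0$ a dense linear subspace of $X$. If $\Omega$ is paracompact and Hausdorff, or $X$ is separable, then for each $\epsilon > 0$, $p \in \mathfrak{A}$ and $f \in C(\Omega, X)$ there is $g \in C(\Omega, X_0)$ such that $\sup_{t\in\Omega} p(f(t) - g(t)) < \epsilon$. *)

(* Defs.v *)
From HB Require Import structures.
From mathcomp Require Import all_boot all_order all_algebra.
From mathcomp Require Import all_classical all_reals all_analysis.
Set Implicit Arguments. Unset Strict Implicit. Unset Printing Implicit Defensive.
Import Order.TTheory GRing.Theory Num.Theory.
Local Open Scope classical_set_scope.
Local Open Scope ring_scope.

Definition seminorm (R : realType) (X : lmodType R) (p : X -> R) : Prop :=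
  (forall x, 0 <= p x) /\
  (forall x y, p (x + y) <= p x + p y) /\
  (forall (a : R) x, p (a *: x) = `|a| * p x).

Definition defining_seminorms (R : realType) (X : tvsType R)
  (A : set (X -> R)) : Prop :=
  (forall p, A p -> seminorm p) /\
  (forall (x : X) (U : set X),
     nbhs x U <->
     exists (F : set (X -> R)) (e : R),
       [/\ finite_set F, F `<=` A, 0 < e &
           [set y | forall p, F p -> p (y - x) < e] `<=` U]).

Definition linear_subspace (R : realType) (X : lmodType R) (S : set X) : Prop :=
  [/\ S 0, (forall x y, S x -> S y -> S (x + y)) &
      (forall (a : R) x, S x -> S (a *: x))].

Definition paracompact (T : topologicalType) : Prop :=
  forall C : set (set T),
    (forall U, C U -> open U) -> \bigcup_(U in C) U = setT ->
    exists D : set (set T),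
      [/\ (forall V, D V -> open V),
          \bigcup_(V in D) V = setT,
          (forall V, D V -> exists2 U, C U & V `<=` U) &
          (forall x : T, exists N, nbhs x N /\
              finite_set [set V | D V /\ V `&` N !=set0])].

Definition separable (T : topologicalType) : Prop :=
  exists D : set T, countable D /\ dense D.

(* Main.v *)
Require Import Defs.
From HB Require Import structures.
From mathcomp Require Import all_boot all_order all_algebra.
From mathcomp Require Import all_classical all_reals all_analysis.
From mathcomp Require Import wochoice.
From mathcomp Require finmap.
From mathcomp Require Import ring lra.
Import Order.TTheory GRing.Theory Num.Theory.
Import numFieldTopology.Exports numFieldNormedType.Exports.
Local Open Scope classical_set_scope.
Local Open Scope ring_scope.
Section Stone.
Context (R : realType) (X : tvsType R) (p : X -> R) (X0 : set X).
Hypothesis sp : seminorm p.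
Hypothesis pcont : forall (x : X) (e : R), 0 < e -> nbhs x [set y | p (y - x) < e].
Hypothesis dX0 : dense X0.
Context (r : R).
Hypothesis r0 : 0 < r.

Lemma p_ge0 x : 0 <= p x. Proof. by case: sp. Qed.
Lemma p_tri x y : p (x + y) <= p x + p y. Proof. by case: sp => _ []. Qed.
Lemma p_scale a x : p (a *: x) = `|a| * p x. Proof. by case: sp => _ []. Qed.
Lemma p0 : p 0 = 0.
Proof. by rewrite -(scale0r (0 : X)) p_scale normr0 mul0r. Qed.
Lemma pN x : p (- x) = p x.
Proof. by rewrite -scaleN1r p_scale normrN normr1 mul1r. Qed.
Lemma pC x y : p (x - y) = p (y - x).
Proof. by rewrite -pN opprB. Qed.
Lemma p_tri3 x y z : p (x - z) <= p (x - y) + p (y - z).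
Proof.
have -> : x - z = (x - y) + (y - z) by rewrite addrA subrK.
exact: p_tri.
Qed.

Lemma ball_open (c : X) (e : R) : open [set y | p (y - c) < e].
Proof.
rewrite openE => y /= hy.
have e0 : 0 < e - p (y - c) by rewrite subr_gt0.
rewrite /interior; move: (pcont y _ e0); apply: filterS => z /= hz.
by apply: le_lt_trans (p_tri3 z y c) _; rewrite -ltrBrDr.
Qed.

Definition le : rel X := proj1_sig (well_ordering_principle X).
Lemma le_wo : well_order le. Proof. exact: proj2_sig (well_ordering_principle X). Qed.

Lemma le_min (A : set X) : A !=set0 -> exists2 z, A z & forall y, A y -> le z y.
Proof.
case=> x Ax.
have ne : nonempty [pred y | `[< A y >]].
  by rewrite /nonempty; exists x; rewrite inE.
have [z [[zA zlb] _]] := @le_wo _ ne.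
exists z; first by move: zA; rewrite inE.
by move=> y Ay; apply: zlb; rewrite inE.
Qed.

Lemma le_pair x y : exists! z, minimum_of le [pred w | (w == x) || (w == y)] z.
Proof. by apply: le_wo; rewrite /nonempty; exists x; rewrite inE eqxx. Qed.

Lemma le_total x y : le x y \/ le y x.
Proof.
have [z [[zA zlb] _]] := le_pair x y.
move: zA zlb; rewrite inE => /orP[/eqP->|/eqP->] zlb.
  by left; apply: zlb; rewrite inE eqxx orbT.
by right; apply: zlb; rewrite inE eqxx.
Qed.

Lemma le_refl x : le x x.
Proof.
have [z [[zA zlb] _]] := le_pair x x.
move: zA zlb; rewrite inE orbb => /eqP -> zlb; apply: zlb; by rewrite inE eqxx.
Qed.

Lemma le_anti x y : le x y -> le y x -> x = y.
Proof.
move=> lxy lyx; have [z [_ zu]] := le_pair x y.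
have mx : minimum_of le [pred w | (w == x) || (w == y)] x.
  split; first by rewrite inE eqxx.
  move=> w; rewrite inE => /orP[/eqP->|/eqP->] //.
  exact: le_refl.
have my : minimum_of le [pred w | (w == x) || (w == y)] y.
  split; first by rewrite inE eqxx orbT.
  move=> w; rewrite inE => /orP[/eqP->|/eqP->] //.
  exact: le_refl.
by rewrite -(zu _ mx) (zu _ my).
Qed.

Definition rho (n : nat) : R := r / 2 ^+ n.
Lemma rho_gt0 n : 0 < rho n.
Proof. by rewrite /rho divr_gt0 // exprn_gt0. Qed.
Lemma rhoS n : rho n.+1 + rho n.+1 = rho n.
Proof. by rewrite /rho exprS; field; rewrite expf_neq0. Qed.
Lemma rho_Sle n : rho n.+1 <= rho n.
Proof. by rewrite -[leRHS]rhoS lerDr ltW // rho_gt0. Qed.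
Lemma rho_le {m n} : (m <= n)%N -> rho n <= rho m.
Proof.
move=> /subnK <-; elim: (n - m)%N => [|k IH] //=.
by rewrite addSn; apply: le_trans (rho_Sle _) IH.
Qed.
Lemma rho_small {d} : 0 < d -> exists n, rho n < d.
Proof.
move=> d0; set b := Num.Def.archi_bound (r / d).
have hb : r / d < b%:R by apply: archi_boundP; rewrite divr_ge0 // ltW.
exists b; rewrite /rho ltr_pdivrMr ?exprn_gt0 //.
rewrite -ltr_pdivrMl // mulrC; apply: (lt_le_trans hb).
rewrite -natrX ler_nat; apply: ltnW; exact: ltn_expl.
Qed.

Definition least (t x : X) := [/\ X0 t, p (x - t) < r &
  forall u, X0 u -> p (x - u) < r -> le t u].
Definition centerC (C : set X) (t : X) (n : nat) (c : X) :=
  [/\ least t c, p (c - t) < r - 3 * rho n & ~ C c].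
Definition DC (C : set X) (t : X) (n : nat) : set X :=
  [set y | exists2 c, centerC C t n c & p (y - c) < rho n].
Fixpoint Cum (n : nat) : set X :=
  if n is m.+1 then Cum m `|` [set y | exists t, DC (Cum m) t m y] else set0.
Definition D (t : X) (n : nat) : set X := DC (Cum n) t n.

Lemma CumP n y : Cum n y <-> exists m t, (m < n)%N /\ D t m y.
Proof.
elim: n => [|n IH] /=; first by split => // -[m [t []]].
split.
  case=> [/IH [m [t [mn Dm]]]|[t Dt]].
    by exists m, t; split => //; apply: ltn_trans mn _.
  by exists n, t.
move=> [m [t [mn Dm]]]; move: mn; rewrite ltnS leq_eqVlt => /orP[/eqP mn|mn].
  by right; exists t; rewrite -mn.
by left; apply/IH; exists m, t.
Qed.

Lemma D_sub t n y : D t n y -> X0 t /\ p (y - t) < r.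
Proof.
case=> c [[Xt _ _] ct _] yc; split => //.
apply: le_lt_trans (p_tri3 y c t) _.
have := rho_gt0 n; lra.
Qed.

Lemma D_open {t n y} : D t n y -> exists2 d, 0 < d & forall z, p (z - y) < d -> D t n z.
Proof.
case=> c cc yc; exists (rho n - p (y - c)); first by rewrite subr_gt0.
move=> z hz; exists c => //; apply: le_lt_trans (p_tri3 z y c) _; lra.
Qed.

Lemma cover x : exists t n, D t n x.
Proof.
have [t [Xt xt] tmin] : exists2 t, (X0 t /\ p (x - t) < r) &
    forall u, (X0 u /\ p (x - u) < r) -> le t u.
  apply: le_min.
  have [|y [/= yx Xy]] := dX0 [set y | p (y - x) < r] _ (ball_open x r).
    by exists x; rewrite /= subrr p0.
  by exists y; split => //; rewrite pC.
have d0 : 0 < (r - p (x - t)) / 3 by rewrite divr_gt0 // subr_gt0.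
have [n hn] := rho_small d0.
case: (pselect (Cum n x)) => [/CumP [m [t' [_ H]]]|nC]; first by exists t', m.
exists t, n; exists x; last by rewrite subrr p0 rho_gt0.
split => //; last lra.
by split => // u Xu xu; apply: tmin.
Qed.

Lemma sep {t u i y z x m} : D t i y -> D u i z -> p (y - x) < rho m ->
  p (z - x) < rho m -> rho m + rho m <= rho i -> le t u -> t = u.
Proof.
case=> c [[Xt _ _] ct _] yc; case=> c' [[Xu c'u umin] _ _] zc' yx zx hm ltu.
case: (pselect (p (c' - t) < r)) => h; first exact: le_anti ltu (umin t Xt h).
exfalso.
have h' : r <= p (c' - t) by rewrite leNgt; apply/negP.
have h1 := p_tri3 c' z t; have h2 := p_tri3 z x t.
have h3 := p_tri3 x y t; have h4 := p_tri3 y c t.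
rewrite (pC c' z) in h1; rewrite (pC x y) in h3.
have := rho_gt0 i; lra.
Qed.

Lemma locfin x : exists m i0, forall t i y, D t i y -> p (y - x) < rho m ->
  (i < i0)%N /\ forall u z, D u i z -> p (z - x) < rho m -> t = u.
Proof.
have [s [n Dx]] := cover x.
have [d d0 dD] := D_open Dx.
have [j hj] := rho_small d0.
set k := maxn n j; exists k.+2, k.+1 => t i y Dy yx.
have Hm := rhoS k.+1; have Hk := rhoS k.
have Hkj : rho k <= rho j by apply: rho_le; exact: leq_maxr.
have Hi : (i < k.+1)%N.
  rewrite ltnNge; apply/negP => ik.
  case: Dy => c [_ _ nC] yc; apply: nC; apply/CumP; exists n, s; split.
    by apply: leq_ltn_trans ik; apply: leq_maxl.
  apply: dD; have h1 := p_tri3 c y x; rewrite (pC c y) in h1.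
  have := rho_le ik; have := rho_Sle k.+1; lra.
split => // u z Dz zx.
have hi : rho k.+2 + rho k.+2 <= rho i by rewrite Hm; apply: rho_le; exact: ltnW.
case: (le_total t u) => h; first exact: sep Dy Dz yx zx hi h.
by apply/esym; exact: sep Dz Dy zx yx hi h.
Qed.

Definition hS (A : set X) (x : X) : set R :=
  [set v | v = 1 \/ exists2 z, ~ A z & v = p (x - z)].
Definition h (A : set X) (x : X) : R := inf (hS A x).

Lemma hS_ne A x : hS A x !=set0. Proof. by exists 1; left. Qed.
Lemma hS_lb A x : lbound (hS A x) 0.
Proof. by move=> v [->|[z _ ->]]; [exact: ler01|exact: p_ge0]. Qed.
Lemma h_ge0 A x : 0 <= h A x.
Proof. exact: lb_le_inf (hS_ne A x) (hS_lb A x). Qed.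
Lemma h_le A x v : hS A x v -> h A x <= v.
Proof. by apply: ge_inf; exists 0; exact: hS_lb. Qed.
Lemma h_out A x : ~ A x -> h A x = 0.
Proof.
move=> nA; apply/eqP; rewrite eq_le h_ge0 andbT -p0 -(subrr x).
by apply: h_le; right; exists x.
Qed.
Lemma h_pos A x : (exists2 d, 0 < d & forall z, p (z - x) < d -> A z) -> 0 < h A x.
Proof.
case=> d d0 dA.
have m0 : 0 < Num.min d 1 by rewrite lt_min d0 ltr01.
apply: lt_le_trans m0 _; apply: lb_le_inf (hS_ne A x) _.
move=> v [->|[z nz ->]]; first by rewrite ge_min lexx orbT.
rewrite ge_min; apply/orP; left; rewrite pC leNgt; apply/negP => /dA; exact: nz.
Qed.
Lemma h_lip A x y : h A x <= p (x - y) + h A y.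
Proof.
suff : h A x - p (x - y) <= h A y by lra.
apply: lb_le_inf (hS_ne A y) _ => v [->|[z nz ->]].
  have := @h_le A x 1 (or_introl erefl); have := p_ge0 (x - y); lra.
have H1 : h A x <= p (x - z) by apply: h_le; right; exists z.
have := p_tri3 x y z; lra.
Qed.
Lemma h_cont A : continuous (h A).
Proof.
move=> x; apply/cvgrPdist_lt => e e0.
move: (pcont x _ e0); apply: filterS => y /= hy.
have h1 := h_lip A x y; have h2 := h_lip A y x; rewrite pC in h1.
by rewrite ltr_norml; apply/andP; split; lra.
Qed.

Hypothesis lX0 : linear_subspace X0.

Lemma p_sum (I : Type) (s : seq I) (F : I -> X) :
  p (\sum_(i <- s) F i) <= \sum_(i <- s) p (F i).
Proof.
elim: s => [|a s IH]; first by rewrite !big_nil p0.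
rewrite !big_cons; apply: le_trans (p_tri _ _) _; by rewrite lerD2l.
Qed.

Lemma tD {T : Type} {F : set_system T} {FF : Filter F} (f g : T -> X) (a b : X) :
  f @ F --> a -> g @ F --> b -> (fun t => f t + g t) @ F --> a + b.
Proof.
move=> fa gb.
apply: (cvg_comp (fun t => (f t, g t)) (fun z : X * X => z.1 + z.2) (cvg_pair fa gb)).
exact: (add_continuous (a, b)).
Qed.

Lemma tZ {T : Type} {F : set_system T} {FF : Filter F} (s : T -> R) (f : T -> X)
    (k : R) (a : X) :
  s @ F --> k -> f @ F --> a -> (fun t => s t *: f t) @ F --> k *: a.
Proof.
move=> sk fa.
apply: (cvg_comp (fun t => ((s t : R^o), f t)) (fun z : R^o * X => z.1 *: z.2)
  (cvg_pair sk fa)).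
exact: (scale_continuous ((k : R^o), a)).
Qed.


Definition w (k : X * nat) (x : X) : R := h (D k.1 k.2) x.
Definition W (x : X) : R := \sum_(k \in [set: X * nat]) w k x.
Definition V (x : X) : X := \sum_(k \in [set: X * nat]) w k x *: k.1.
Definition phi (x : X) : X := (W x)^-1 *: V x.

Lemma w_ne0 k x : w k x != 0 -> D k.1 k.2 x.
Proof.
move=> wn; case: (pselect (D k.1 k.2 x)) => // nD.
by move: wn; rewrite /w h_out ?eqxx.
Qed.

Lemma loc (x : X) : exists2 s : seq (X * nat), uniq s &
  nbhs x [set y | forall k, k \notin s -> w k y = 0].
Proof.
have [m [i0 H]] := locfin x.
pose g i := xget (0 : X) [set t | exists2 y, D t i y & p (y - x) < rho m].
exists (undup [seq (g i, i) | i <- iota 0 i0]); first exact: undup_uniq.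
move: (pcont x _ (rho_gt0 m)); apply: filterS => y /= yx k ks.
case: (eqVneq (w k y) 0) => // /w_ne0 Dk; exfalso; move/negP: ks; apply.
have [ilt uniq] := H _ _ _ Dk yx.
have [z Dz zx] : exists2 z, D (g k.2) k.2 z & p (z - x) < rho m.
  by apply: (xgetPex (0 : X) (P := [set t | exists2 y, D t k.2 y & p (y - x) < rho m])); exists k.1, y.
have E := uniq _ _ Dz zx.
rewrite mem_undup; apply/mapP; exists k.2; first by rewrite mem_iota.
by rewrite -E; case: k {Dk E uniq ilt Dz zx}.
Qed.

Lemma fsum_loc (M : nmodType) (F : X * nat -> M) (s : seq (X * nat)) :
  uniq s -> (forall k, k \notin s -> F k = 0) ->
  \sum_(k \in [set: X * nat]) F k = \sum_(k <- s) F k.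
Proof.
move=> us Hs; rewrite fsbig_supp (fsbig_fwiden s) //.
  by move=> k [_ /= wn]; apply/negPn/negP => /Hs.
move=> k [_ nk] /=; case: (eqVneq (F k) 0) => // /eqP wn; exfalso; exact: nk.
Qed.

Lemma W_loc {s : seq (X * nat)} {y} : uniq s -> (forall k, k \notin s -> w k y = 0) ->
  W y = \sum_(k <- s) w k y.
Proof. by move=> us Hs; rewrite /W (fsum_loc _ _ _ us). Qed.

Lemma V_loc {s : seq (X * nat)} {y} : uniq s -> (forall k, k \notin s -> w k y = 0) ->
  V y = \sum_(k <- s) w k y *: k.1.
Proof. by move=> us Hs; rewrite /V (fsum_loc _ _ _ us) // => k /Hs ->; rewrite scale0r. Qed.

Lemma W_pos x : 0 < W x.
Proof.
have [s us /nbhs_singleton /= Hs] := loc x.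
have [t [n Dx]] := cover x.
have wp : 0 < w (t, n) x by apply: h_pos; exact: D_open.
have ins : (t, n) \in s.
  by apply/negPn/negP => /Hs wz; move: wp; rewrite wz ltxx.
rewrite (W_loc us Hs) (big_rem _ ins) /=.
apply: lt_le_trans wp _; rewrite lerDl; apply: sumr_ge0 => k _; exact: h_ge0.
Qed.

Lemma phi_cont : continuous phi.
Proof.
move=> x; rewrite /continuous_at; have [s us Hs] := loc x.
pose psi y := (\sum_(k <- s) w k y)^-1 *: \sum_(k <- s) w k y *: k.1.
have E : {near x, psi =1 phi}.
  by move: Hs; apply: filterS => y Hy; rewrite /psi /phi (W_loc us Hy) (V_loc us Hy).
have -> : phi x = psi x by rewrite /psi /phi (W_loc us (nbhs_singleton Hs)) (V_loc us (nbhs_singleton Hs)).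
apply: cvg_trans (near_eq_cvg E) _.
have Wc : (fun y => \sum_(k <- s) w k y) @ x --> \sum_(k <- s) w k x.
  elim: (s) => [|a l IH].
    by under eq_fun do rewrite big_nil; rewrite big_nil; exact: cvg_cst.
  under eq_fun do rewrite big_cons; rewrite big_cons.
  by apply: cvgD => //; exact: h_cont.
have Vc : (fun y => \sum_(k <- s) w k y *: k.1) @ x --> \sum_(k <- s) w k x *: k.1.
  elim: (s) => [|a l IH].
    by under eq_fun do rewrite big_nil; rewrite big_nil; exact: cvg_cst.
  under eq_fun do rewrite big_cons; rewrite big_cons.
  apply: tD => //; apply: tZ; [exact: h_cont|exact: cvg_cst].
apply: tZ => //; apply: cvgV => //.
by rewrite -(W_loc us (nbhs_singleton Hs)) gt_eqF // W_pos.
Qed.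

Lemma phi_X0 x : X0 (phi x).
Proof.
case: lX0 => L0 LD LZ.
have [s us /nbhs_singleton /= Hs] := loc x.
rewrite /phi; apply LZ; rewrite (V_loc us Hs).
apply: (big_ind X0) => // k _.
case: (eqVneq (w k x) 0) => [->|/w_ne0 /D_sub [Xk _]]; first by rewrite scale0r.
exact: LZ.
Qed.

Lemma phi_approx x : p (phi x - x) <= r.
Proof.
have [s us /nbhs_singleton /= Hs] := loc x.
have Wp := W_pos x.
have -> : phi x - x = (W x)^-1 *: \sum_(k <- s) w k x *: (k.1 - x).
  have -> : phi x - x = (W x)^-1 *: (V x - W x *: x).
    by rewrite scalerBr scalerA mulVf ?scale1r // (negbT (gt_eqF Wp)).
  congr (_ *: _); rewrite (V_loc us Hs) [in W x](W_loc us Hs) scaler_suml -sumrB.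
  by apply: eq_bigr => k _; rewrite scalerBr.
rewrite p_scale gtr0_norm ?invr_gt0 //.
rewrite ler_pdivrMl //; apply: le_trans (p_sum _ _ _) _.
rewrite (W_loc us Hs) mulr_suml; apply: ler_sum => k _.
rewrite p_scale ger0_norm ?h_ge0 //.
case: (eqVneq (w k x) 0) => [->|/w_ne0 /D_sub [_ hk]]; first by rewrite !mul0r.
by rewrite pC ler_wpM2l ?h_ge0 // ltW.
Qed.
End Stone.

Theorem theorem3p20 (R : realType) (Omega : topologicalType) (X : tvsType R)
  (A : set (X -> R)) (X0 : set X) :
  defining_seminorms A -> linear_subspace X0 -> dense X0 ->
  (paracompact Omega /\ hausdorff_space Omega) \/ separable X ->
  forall (eps : R) (p : X -> R) (f : Omega -> X),
    0 < eps -> A p -> continuous f ->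
    exists g : Omega -> X,
      [/\ continuous g, (forall t, X0 (g t)) &
          (ereal_sup [set (p (f t - g t))%:E | t in [set: Omega]] < eps%:E)%E].
Proof.
move=> [Asp Anb] lX0 dX0 _ eps p f eps0 Ap fc.
have sp := Asp p Ap.
have pcont : forall (x : X) (e : R), 0 < e -> nbhs x [set y | p (y - x) < e].
  move=> x e e0; apply/(Anb x); exists [set p], e.
  split; [exact: finite_set1 | by move=> q -> | exact: e0 | by move=> y /(_ p erefl)].
have r0 : 0 < eps / 2 by rewrite divr_gt0.
exists (@phi R X p X0 (eps / 2) \o f); split.
- move=> t; apply: continuous_comp; first exact: fc.
  exact: (phi_cont _ _ _ _ sp pcont dX0 _ r0 (f t)).
- by move=> t; exact: (phi_X0 _ _ _ _ sp pcont dX0 _ r0 lX0).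
- apply: (@le_lt_trans _ _ (eps / 2)%:E).
    apply: ge_ereal_sup => _ [t _ <-]; rewrite lee_fin pC //.
    exact: (phi_approx _ _ _ _ sp pcont dX0 _ r0).
  rewrite lte_fin; lra.
Qed.
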